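(* Let $V\subset\mathbb{R}^n$ be a singular irreducible central real algebraic variety with coordinate ring $A=\mathbb{R}[V]$, and let $B$ be an $A$-algebra which is a subring of the ring of continuous semi-algebraic functions on $V$ (containing the polynomial functions). Assume $B$ has the Łojasiewicz property: for any $f,g\in B$ with $\mathcal{Z}(f)\subset\mathcal{Z}(g)$ there exist $h\in B$ and an integer $N$ with $g^N=fh$. Then $B$ has the weak substitution property over points: every ring homomorphism $A\to\mathbb{R}$ admits one and only one extension to a ring homomorphism $B\to\mathbb{R}$.
   Context: $V$ is central if its non-singular points are dense in $V$ for the Euclidean topology. $\mathcal{Z}(f)$ denotes the zero set of $f$ in $V$. *)

(* Defs.v *)
From Stdlib Require Import Rdefinitions.
From HB Require Import structures.
From mathcomp Require Import all_boot all_order all_algebra.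
From mathcomp Require Import mpoly.
From mathcomp Require Import Rstruct.

Set Implicit Arguments.
Unset Strict Implicit.
Unset Printing Implicit Defensive.
Import Order.TTheory GRing.Theory Num.Theory.
Local Open Scope ring_scope.

Definition pt (n : nat) := 'I_n -> R.
Definition poly (n : nat) := {mpoly R[n]}.
Definition ev (n : nat) (p : poly n) (x : pt n) : R := p.@[x].

Definition dist2 (n : nat) (x y : pt n) : R := \sum_(i < n) (x i - y i) ^+ 2.

Definition zero_set (n : nat) (S : seq (poly n)) : pt n -> Prop :=
  fun x => forall p, p \in S -> ev p x = 0.

Definition algebraic_set (n : nat) (V : pt n -> Prop) : Prop :=
  exists S : seq (poly n), forall x, V x <-> zero_set S x.

Definition vanishing (n : nat) (V : pt n -> Prop) (p : poly n) : Prop :=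
  forall x, V x -> ev p x = 0.

(* Irreducible: V nonempty and not the union of two proper algebraic
   subsets, i.e. whenever V is covered by two algebraic sets, one of them
   already contains V. *)
Definition irreducible (n : nat) (V : pt n -> Prop) : Prop :=
  (exists x, V x) /\
  forall W1 W2 : pt n -> Prop, algebraic_set W1 -> algebraic_set W2 ->
    (forall x, V x -> W1 x \/ W2 x) ->
    (forall x, V x -> W1 x) \/ (forall x, V x -> W2 x).

Definition is_ideal (n : nat) (P : poly n -> Prop) : Prop :=
  P 0 /\ (forall p q, P p -> P q -> P (p + q)) /\
  (forall p q, P q -> P (p * q)).

Definition is_prime_ideal (n : nat) (P : poly n -> Prop) : Prop :=
  is_ideal P /\ ~ P 1 /\ (forall p q, P (p * q) -> P p \/ P q).

(* There is a chain I(V) <= P_0 < P_1 < ... < P_d of prime ideals of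
   R[x], i.e. a chain of length d of prime ideals of R[V] = R[x]/I(V). *)
Definition krull_dim_ge (n : nat) (V : pt n -> Prop) (d : nat) : Prop :=
  exists P : nat -> poly n -> Prop,
    (forall i : nat, (i <= d)%N -> is_prime_ideal (P i)) /\
    (forall p, vanishing V p -> P 0%N p) /\
    (forall i : nat, (i < d)%N ->
       (forall p, P i p -> P i.+1 p) /\ exists p, P i.+1 p /\ ~ P i p).

Definition dimension (n : nat) (V : pt n -> Prop) (d : nat) : Prop :=
  krull_dim_ge V d /\ ~ krull_dim_ge V d.+1.

Definition generates_vanishing (n : nat) (V : pt n -> Prop)
    (ps : seq (poly n)) : Prop :=
  forall p, vanishing V p <->
    exists qs : 'I_(size ps) -> poly n,
      p = \sum_(i < size ps) qs i * ps`_i.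

Definition jacobian (n : nat) (ps : seq (poly n)) (x : pt n)
    : 'M[R]_(size ps, n) :=
  \matrix_(i < size ps, j < n) ev (mderiv j ps`_i) x.

Definition nonsingular (n : nat) (V : pt n -> Prop) (x : pt n) : Prop :=
  V x /\ exists d ps, dimension V d /\ generates_vanishing V ps /\
    \rank (jacobian ps x) = (n - d)%N.

Definition singular_variety (n : nat) (V : pt n -> Prop) : Prop :=
  exists x, V x /\ ~ nonsingular V x.

Definition central (n : nat) (V : pt n -> Prop) : Prop :=
  forall x, V x -> forall e : R, 0 < e ->
    exists y, nonsingular V y /\ dist2 x y < e ^+ 2.

Definition pts (n : nat) (V : pt n -> Prop) := {x : pt n | V x}.
Definition fn (n : nat) (V : pt n -> Prop) := pts V -> R.

(* Semi-algebraic subsets of R^m: finite unions of basic sets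
   {f = 0, g_1 > 0, ..., g_k > 0}. *)
Definition semialgebraic_set (m : nat) (S : pt m -> Prop) : Prop :=
  exists L : seq (poly m * seq (poly m)), forall y,
    S y <-> exists2 fg, fg \in L &
      ev fg.1 y = 0 /\ forall g, g \in fg.2 -> 0 < ev g y.

Definition graph (n : nat) (V : pt n -> Prop) (f : fn V) : pt n.+1 -> Prop :=
  fun y => exists v : pts V,
    (forall i : 'I_n, y (widen_ord (leqnSn n) i) = sval v i) /\
    y ord_max = f v.

Definition semialgebraic_fun (n : nat) (V : pt n -> Prop) (f : fn V) : Prop :=
  semialgebraic_set (graph f).

Definition continuous_on (n : nat) (V : pt n -> Prop) (f : fn V) : Prop :=
  forall v : pts V, forall e : R, 0 < e -> exists2 d : R, 0 < d &
    forall w : pts V, dist2 (sval v) (sval w) < d ^+ 2 ->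
      `|f v - f w| < e.

(* The coordinate ring R[V], as the ring of polynomial functions on V. *)
Definition polyfun (n : nat) (V : pt n -> Prop) (f : fn V) : Prop :=
  exists p : poly n, forall v : pts V, f v = ev p (sval v).

Definition ring_hom_on (n : nat) (V : pt n -> Prop) (S : fn V -> Prop)
    (phi : fn V -> R) : Prop :=
  (forall f g, S f -> S g -> phi (fun v => f v + g v) = phi f + phi g) /\
  (forall f g, S f -> S g -> phi (fun v => f v * g v) = phi f * phi g) /\
  phi (fun _ => 1) = 1.

Definition admissible_algebra (n : nat) (V : pt n -> Prop) (B : fn V -> Prop)
  : Prop :=
  (forall f, B f -> continuous_on f /\ semialgebraic_fun f) /\
  (forall f, polyfun f -> B f) /\
  (forall f g, B f -> B g -> B (fun v => f v + g v)) /\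
  (forall f, B f -> B (fun v => - f v)) /\
  (forall f g, B f -> B g -> B (fun v => f v * g v)).

Definition lojasiewicz_property (n : nat) (V : pt n -> Prop) (B : fn V -> Prop)
  : Prop :=
  forall f g, B f -> B g -> (forall v, f v = 0 -> g v = 0) ->
    exists h, B h /\ exists N : nat, forall v, g v ^+ N = f v * h v.

Definition weak_substitution_property (n : nat) (V : pt n -> Prop)
    (B : fn V -> Prop) : Prop :=
  forall psi, ring_hom_on (@polyfun n V) psi ->
    (exists phi, ring_hom_on B phi /\ forall f, polyfun f -> phi f = psi f) /\
    (forall phi1 phi2, ring_hom_on B phi1 -> ring_hom_on B phi2 ->
       (forall f, polyfun f -> phi1 f = psi f) ->
       (forall f, polyfun f -> phi2 f = psi f) ->
       forall f, B f -> phi1 f = phi2 f).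

(* Main.v *)
From Stdlib Require Import Rdefinitions.
Require Import Defs.
From mathcomp Require Import all_boot all_order all_algebra mpoly Rstruct lra.
Import Order.TTheory GRing.Theory Num.Theory.
Local Open Scope ring_scope.

Lemma ringhom_id (s : R -> R) : (forall x y, s (x+y) = s x + s y) ->
  (forall x y, s (x*y) = s x * s y) -> s 1 = 1 -> forall x, s x = x.
Proof.
move=> sD sM s1.
have s0 : s 0 = 0 by apply: (addrI (s 0)); rewrite -sD !addr0.
have sN x : s (- x) = - s x by apply: (addrI (s x)); rewrite -sD !subrr s0.
have sB x y : s (x - y) = s x - s y by rewrite sD sN.
have mono x y : x <= y -> s x <= s y.
  move=> xy; rewrite -subr_ge0 -sB.
  have e : y - x = Num.sqrt (y - x) ^+ 2 by rewrite sqr_sqrtr // subr_ge0.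
  by rewrite e expr2 sM -expr2 sqr_ge0.
have snat k : s k%:R = k%:R.
  elim: k => [|k IH]; first by rewrite s0.
  by rewrite mulrS sD s1 IH -mulrS.
have key x : s x <= x.
  case: (lerP (s x) x) => // hx; exfalso.
  set d := s x - x.
  have d0 : 0 < d by rewrite subr_gt0.
  have di : 0 <= d^-1 by rewrite invr_ge0 ltW.
  have := archi_boundP di; set k := Num.bound _ => hk.
  have kd : 1 < k%:R * d.
    by move: hk; rewrite -[d^-1]mul1r ltr_pdivrMr.
  set y := k%:R * x.
  have sy : s y - y = k%:R * d by rewrite /y sM snat /d mulrBr.
  have := archi_boundP (normr_ge0 y); set j := Num.bound _ => hj.
  set z := y + j%:R.
  have z0 : 0 <= z by rewrite /z; have := ler_norm (- y); rewrite normrN; lra.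
  have sz : s z = s y + j%:R by rewrite /z sD snat.
  have [t1 t2] := andP (truncn_itv z0).
  have hm : s z <= s (Num.truncn z).+1%:R by apply: mono; exact: ltW.
  rewrite snat mulrS in hm.
  have ez : z = y + j%:R by [].
  clearbody z y d.
  move: hm t1 sz sy kd ez; set T := (Num.truncn z)%:R; set K := k%:R * d; lra.
move=> x; apply/le_anti; rewrite key /=.
by have := key (- x); rewrite sN; lra.
Qed.

From Stdlib Require Import FunctionalExtensionality ProofIrrelevance.

Definition lift (n : nat) (V : pt n -> Prop) (p : Defs.poly n) : fn V :=
  fun v => ev p (sval v).
Arguments lift {n} V p.

Lemma dist2_eq0 (n : nat) (x y : pt n) : dist2 x y = 0 -> x = y.
Proof.
move=> h; apply: functional_extensionality => i.
have := @psumr_eq0P _ _ xpredT (fun i => (x i - y i) ^+ 2) (fun i _ => sqr_ge0 (x i - y i)) h i isT.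
by move/eqP; rewrite sqrf_eq0 subr_eq0 => /eqP.
Qed.

Theorem proposition4p1 (n : nat) (V : pt n -> Prop) (B : fn V -> Prop) :
  algebraic_set V -> irreducible V -> singular_variety V -> central V ->
  admissible_algebra B -> lojasiewicz_property B ->
  weak_substitution_property B.
Proof.
move=> [S HS] _ _ _ [_ [HBpoly [HBadd [HBopp HBmul]]]] Hloj psi [pD [pM p1]].
have polyL p : polyfun (lift V p) by exists p.
have polyC c : polyfun (fun _ : pts V => c) by exists c%:MP => v; rewrite /ev mevalC.
pose Psi p := psi (lift V p).
have PsiD p q : Psi (p + q) = Psi p + Psi q.
  rewrite /Psi -pD //; congr psi; apply: functional_extensionality => v.
  by rewrite /lift /ev mevalD.
have PsiM p q : Psi (p * q) = Psi p * Psi q.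
  rewrite /Psi -pM //; congr psi; apply: functional_extensionality => v.
  by rewrite /lift /ev mevalM.
pose sg c := psi (fun _ : pts V => c).
have sgid : forall c, sg c = c.
  apply: ringhom_id => [x y|x y|//].
  - exact: (pD (fun _ => x) (fun _ => y)).
  - exact: (pM (fun _ => x) (fun _ => y)).
have PsiC c : Psi c%:MP = c.
  rewrite /Psi -[RHS]sgid /sg; congr psi; apply: functional_extensionality => v.
  by rewrite /lift /ev mevalC.
pose a : pt n := fun i => Psi 'X_i.
have PsiX p k : Psi (p ^+ k) = Psi p ^+ k.
  elim: k => [|k IH]; first by rewrite !expr0 -(PsiC 1).
  by rewrite !exprS PsiM IH.
have PsiE p : Psi p = ev p a.
  rewrite {1}(mpolyE p) /ev mevalE.
  rewrite (big_morph Psi PsiD (PsiC 0)); apply: eq_bigr => m _.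
  rewrite -mul_mpolyC PsiM PsiC mpolyXE_id.
  rewrite (big_morph Psi PsiM (PsiC 1)); congr (_ * _); apply: eq_bigr => i _.
  by rewrite PsiX.
have Ha : V a.
  apply/HS => p pS; rewrite -PsiE -[RHS](sgid 0) /Psi /sg; congr psi.
  apply: functional_extensionality => v; rewrite /lift.
  by apply: (proj1 (HS _) (svalP v)).
pose a0 : pts V := exist _ a Ha.
have polyE f : polyfun f -> psi f = f a0.
  move=> [p hp]; have -> : f = lift V p by apply: functional_extensionality.
  by rewrite -/(Psi p) PsiE.
have uniq phi : ring_hom_on B phi -> (forall f, polyfun f -> phi f = psi f) ->
    forall f, B f -> phi f = f a0.
  move=> [phD [phM ph1]] ext f Bf.
  set c := f a0.
  have Bc : B (fun _ => - c) by apply: HBpoly; exact: polyC.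
  pose g := fun v => f v + - c.
  have Bg : B g by exact: (HBadd f (fun _ => - c) Bf Bc).
  have phg : phi g = phi f - c.
    by rewrite (phD f (fun _ => - c) Bf Bc) (ext (fun _ => - c)) ?polyE //=.
  pose q : Defs.poly n := \sum_(i < n) ('X_i - (a i)%:MP) ^+ 2.
  have evq x : ev q x = dist2 x a.
    rewrite /ev /q /dist2 (big_morph (meval x) (mevalD x) (meval0 x)).
    by apply: eq_bigr => i _; rewrite !expr2 mevalM mevalB mevalXU mevalC.
  have Bq : B (lift V q) by apply: HBpoly.
  have Zq : forall v, lift V q v = 0 -> g v = 0.
    move=> [x hx]; rewrite /lift evq /= => /dist2_eq0 ex; subst x.
    by rewrite /g (proof_irrelevance _ hx Ha) subrr.
  have [h [Bh [N HN]]] := Hloj _ _ Bq Bg Zq.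
  have pw : forall k, B (fun v => g v ^+ k) /\ phi (fun v => g v ^+ k) = phi g ^+ k.
    elim => [|k [Bk Pk]].
      have -> : (fun v => g v ^+ 0) = (fun _ => 1) by apply: functional_extensionality.
      by split; [apply: HBpoly; exact: polyC | rewrite ph1].
    have -> : (fun v => g v ^+ k.+1) = (fun v => g v * g v ^+ k).
      by apply: functional_extensionality => v; rewrite exprS.
    split; first exact: (HBmul g _ Bg Bk).
    by rewrite (phM g _ Bg Bk) Pk exprS.
  have [_ PN] := pw N.
  have : phi g ^+ N = 0.
    rewrite -PN.
    have -> : (fun v => g v ^+ N) = (fun v => lift V q v * h v).
      by apply: functional_extensionality => v; rewrite HN.
    rewrite (phM _ _ Bq Bh) ext // polyE // /lift evq /dist2 big1 ?mul0r //.
    by move=> i _; rewrite subrr expr0n.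
  move/eqP; rewrite expf_eq0 => /andP [_ /eqP].
  by rewrite phg => /eqP; rewrite subr_eq0 => /eqP.
split.
  exists (fun f => f a0); split; last by move=> f /polyE.
  by split => // f g _ _.
move=> phi1 phi2 h1 h2 e1 e2 f Bf.
by rewrite (uniq _ h1 e1 f Bf) (uniq _ h2 e2 f Bf).
Qed.
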